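(* Let $H$ be a hero and let $c$ be the maximum dichromatic number of a tournament containing no induced subdigraph isomorphic to $H$. Then every oriented graph $D$ in which both $x^+$ and $x^-$ induce tournaments for every vertex $x$, and which contains no induced subdigraph isomorphic to $H$, has dichromatic number at most $2c$.
   Context: Digraphs are finite, no loops, no parallel arcs; an oriented graph has no digon. $x^+$, $x^-$ are out- and in-neighbourhoods. The dichromatic number of a digraph is the least number of colours in a vertex colouring in which every colour class induces a subdigraph with no directed cycle. A hero is a tournament $H$ such that the tournaments containing no induced copy of $H$ have bounded dichromatic number (so $c$ is finite). *)

(* Defs.v *)
From Stdlib Require Import ClassicalEpsilon.
From mathcomp Require Import all_boot.
Set Implicit Arguments. Unset Strict Implicit. Unset Printing Implicit Defensive.

Section Digraphs.
Variables (V : finType) (E : rel V).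

(* finite digraph: no loops (parallel arcs impossible with a relation) *)
Definition digraph := forall x, ~~ E x x.

Definition oriented := digraph /\ forall x y, E x y -> ~~ E y x.

Definition tournament_on (A : {set V}) :=
  [/\ forall x, x \in A -> ~~ E x x,
      forall x y, x \in A -> y \in A -> E x y -> ~~ E y x &
      forall x y, x \in A -> y \in A -> x != y -> E x y || E y x].

Definition tournament := tournament_on [set: V].

Definition out_nbhd (x : V) : {set V} := [set y | E x y].
Definition in_nbhd (x : V) : {set V} := [set y | E y x].

Definition dicycle (s : seq V) := [/\ uniq s, 2 <= size s & cycle E s].

Definition acyclic_set (A : {set V}) :=
  forall s, dicycle s -> ~ all (fun x => x \in A) s.

Definition dicolourable (k : nat) :=
  exists f : V -> 'I_k, forall i : 'I_k, acyclic_set [set x | f x == i].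

Definition dicolourableb (k : nat) : bool :=
  if excluded_middle_informative (dicolourable k) then true else false.

Lemma dicolourable_exists : exists k, dicolourableb k.
Proof.
exists #|V|; rewrite /dicolourableb.
case: excluded_middle_informative => // [[]].
exists (@enum_rank V) => i s [us ss _] /allP sA.
case: s us ss sA => [|x [|y s]] //= /andP [xns _] _ sA.
have hx := sA x (mem_head _ _); have hy := sA y ltac:(by rewrite !inE eqxx orbT).
rewrite !inE in hx hy; move: xns; rewrite inE negb_or => /andP [xy _].
by move: xy; rewrite -(inj_eq (@enum_rank_inj V)) (eqP hx) (eqP hy) eqxx.
Qed.

Definition dichromatic : nat := ex_minn dicolourable_exists.

End Digraphs.

Definition contains_induced (H : finType) (EH : rel H) (V : finType) (E : rel V) :=
  exists f : H -> V, injective f /\ forall u v, EH u v = E (f u) (f v).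

Definition hero (H : finType) (EH : rel H) :=
  tournament EH /\
  exists c, forall (T : finType) (ET : rel T),
    tournament ET -> ~ contains_induced EH ET -> dichromatic ET <= c.

(* Main.v *)
Require Import Defs.
From mathcomp Require Import all_boot zify.
From Stdlib Require Import ClassicalEpsilon Classical.
Set Implicit Arguments. Unset Strict Implicit. Unset Printing Implicit Defensive.

Section Sub.
Variables (H : finType) (EH : rel H) (c : nat).
Hypothesis hc : forall (T : finType) (ET : rel T),
      tournament ET -> ~ contains_induced EH ET -> dichromatic ET <= c.
Variables (V : finType) (E : rel V).
Hypothesis Eor : oriented E.
Hypothesis hfree : ~ contains_induced EH E.

Lemma dich_col (T : finType) (ET : rel T) : tournament ET -> ~ contains_induced EH ET ->
  exists g : T -> nat, (forall t, g t < c) /\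
    forall k s, dicycle ET s -> all (fun t => g t == k) s -> False.
Proof.
move=> hT hF; have le := hc hT hF.
move: le; rewrite /dichromatic; case: ex_minnP => m hm _ le.
have [f hf] : dicolourable ET m.
  by move: hm; rewrite /dicolourableb; case: excluded_middle_informative.
exists (fun t => nat_of_ord (f t)); split=> [t|k s hs hall].
  exact: leq_trans (ltn_ord _) le.
case: s hs hall => [|y s] hs hall; first by case: hs.
have ky : nat_of_ord (f y) = k by move: hall => /= /andP [/eqP].
apply: (hf (f y) (y :: s) hs); apply/allP => z zin; rewrite inE.
move/allP: hall => /(_ z zin) /eqP hz.
by apply/eqP; apply: val_inj; rewrite /= hz ky.
Qed.

Lemma tour_col (K : {set V}) : tournament_on E K ->
  exists g : V -> nat, (forall v, v \in K -> g v < c) /\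
    forall k s, dicycle E s -> all (fun v => (v \in K) && (g v == k)) s -> False.
Proof.
move=> [hl hd ha].
pose T := {v : V | v \in K}.
pose ET := [rel t u : T | E (val t) (val u)].
have hT : tournament ET.
  split=> [t _|t u _ _|t u _ _ tu] /=.
  - exact: hl (valP t).
  - exact: hd (valP t) (valP u).
  - apply: ha (valP t) (valP u) _; by rewrite (inj_eq val_inj).
have hF : ~ contains_induced EH ET.
  move=> [f [fi fE]]; apply: hfree; exists (fun h => val (f h)); split.
    by move=> a b /val_inj /fi.
  by move=> a b; rewrite fE.
have [g [gc gg]] := dich_col hT hF.
exists (fun v => if insub v is Some t then g t else 0); split=> [v vK|k s hs hall].
  by rewrite insubT.
have sK : all (fun v => v \in K) s by apply: sub_all hall => v /andP [].
pose s' := pmap (insub : V -> option T) s.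
have ms : map val s' = s.
  rewrite (pmap_filter (insubK _)); apply/all_filterP.
  by apply: sub_all sK => v vK; rewrite insubT.
apply: (gg k s').
  case: hs => us ss cs; split.
  - by rewrite -(map_inj_uniq val_inj) ms.
  - by rewrite -(size_map val) ms.
  - by rewrite /ET -cycle_map ms.
apply/allP => t ts; have vs : val t \in s by rewrite -ms map_f.
move/allP: hall => /(_ _ vs) /andP [_]; by rewrite valK.
Qed.
End Sub.

Section Layer.
Variables (V : finType) (E : rel V).
Hypothesis Eor : oriented E.
Hypothesis Eloc : forall x, tournament_on E (out_nbhd E x) /\ tournament_on E (in_nbhd E x).

Lemma out_adj x a b : E x a -> E x b -> a != b -> E a b || E b a.
Proof. move=> xa xb ab; case: (Eloc x) => [[_ _ h] _]; apply: h => //; by rewrite inE. Qed.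
Lemma in_adj x a b : E a x -> E b x -> a != b -> E a b || E b a.
Proof. move=> xa xb ab; case: (Eloc x) => [_ [_ _ h]]; apply: h => //; by rewrite inE. Qed.

Variables (S : {set V}) (x : V).
Hypothesis xS : x \in S.
Definition ES := [rel u v | [&& E u v, u \in S & v \in S]].
Fixpoint reachk k v := if k is k'.+1 then reachk k' v || [exists u, reachk k' u && ES u v]
  else v == x.
Definition dist v : nat := match excluded_middle_informative (exists k, reachk k v) with
  left h => ex_minn h | right _ => 0 end.

Lemma reachk_S k v : reachk k v -> v \in S.
Proof.
elim: k v => [|k IH] v /=; first by move/eqP ->.
by case/orP => [/IH //| /existsP [u /andP [_ /and3P [_ _ ->]]]].
Qed.

Lemma reachk_step k u v : reachk k u -> ES u v -> reachk k.+1 v.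
Proof. by move=> hu huv /=; apply/orP; right; apply/existsP; exists u; rewrite hu. Qed.

Lemma dist_reach k v : reachk k v -> reachk (dist v) v /\ dist v <= k.
Proof.
rewrite /dist => hk; case: excluded_middle_informative => [h|[]]; last by exists k.
by case: ex_minnP => m hm hmin; split => //; apply: hmin.
Qed.

Lemma dist_arc k u v : reachk k u -> ES u v -> dist v <= (dist u).+1.
Proof.
move=> hu huv; have [hd _] := dist_reach hu.
exact: (dist_reach (reachk_step hd huv)).2.
Qed.

Lemma dist0 k v : reachk k v -> dist v = 0 -> v = x.
Proof. by move=> hk h0; have [] := dist_reach hk; rewrite h0 => /eqP. Qed.

Lemma distx : dist x = 0.
Proof. by have [_] := @dist_reach 0 x (eqxx x); rewrite leqn0 => /eqP. Qed.

Lemma dist_par k v j : reachk k v -> dist v = j.+1 ->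
  exists q, [/\ reachk j q, ES q v & dist q = j].
Proof.
move=> hk hd; have [hr _] := dist_reach hk; rewrite hd /= in hr.
case/orP: hr => [hr|/existsP [q /andP [hq hqv]]].
  by have [_] := dist_reach hr; rewrite hd ltnn.
exists q; split => //; apply/eqP; rewrite eqn_leq (dist_reach hq).2 /=.
by have := dist_arc hq hqv; rewrite hd ltnS.
Qed.

Lemma reach_connect k v : reachk k v -> connect ES x v.
Proof.
elim: k v => [|k IH] v /=; first by move/eqP ->.
case/orP => [/IH //| /existsP [u /andP [hu huv]]].
apply: (connect_trans (IH _ hu)); exact: connect1.
Qed.

Lemma path_reach p y k : reachk k y -> path ES y p -> reachk (k + size p) (last y p).
Proof.
elim: p y k => [|z p IH] y k /=; first by rewrite addn0.
move=> hy /andP [hyz hp]; rewrite addnS -addSn; apply: IH hp.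
exact: reachk_step hy hyz.
Qed.

Lemma connect_reach v : connect ES x v -> exists k, reachk k v.
Proof.
case/connectP => p hp ->; exists (0 + size p); apply: path_reach hp.
by rewrite /= eqxx.
Qed.

Lemma back j : forall u w ku kw, reachk ku u -> reachk kw w -> dist w = j -> j < dist u ->
  E u w -> E u x.
Proof.
elim: j => [|j IH] u w ku kw hu hw hdw hlt huw.
  by rewrite -(dist0 hw hdw).
have [q [hq hqw hdq]] := dist_par hw hdw.
move: hqw => /and3P [hqw qS wS].
have qu : q != u by apply/eqP => equ; move: hlt; rewrite -equ hdq; lia.
case/orP: (in_adj hqw huw qu) => [hqu|huq].
  have hE : ES q u by rewrite /= hqu qS (reachk_S hu).
  have h := dist_arc hq hE; rewrite hdq in h.
  by move: hlt; rewrite ltnNge h.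
exact: IH hu hq hdq (ltnW hlt) huq.
Qed.

Definition El := [rel u v | [&& ES u v, connect ES x u & dist u == dist v]].

Lemma El_path p a : path El a p -> dist (last a p) = dist a.
Proof.
elim: p a => [|v p IH] a //= /andP [/and3P [_ _ /eqP h] hp].
by rewrite IH.
Qed.

Lemma Bstep u w : 1 < dist u -> El u w -> E u x -> E w x.
Proof.
move=> h1 /and3P [/and3P [huw uS wS] _ /eqP hd] hux.
have wx : x != w by apply/eqP => ewx; move: h1; rewrite hd -ewx distx.
case/orP: (out_adj hux huw wx) => // hxw.
have hE : ES x w by rewrite /= hxw xS wS.
have := dist_arc (eqxx x : reachk 0 x) hE; rewrite distx -hd => h.
by move: h1; rewrite ltnNge h.
Qed.

Lemma Bpath p u : path El u p -> 1 < dist u -> E u x -> E (last u p) x.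
Proof.
elim: p u => [|v p IH] u //= /andP [huv hp] h1 hux.
have hd : dist u = dist v by case/and3P: huv => _ _ /eqP.
apply: IH hp _ (Bstep h1 huv hux); by rewrite -hd.
Qed.

Lemma parstep u v q kq : El u v -> ~~ E u x -> reachk kq q -> ES q v ->
  (dist q).+1 = dist v -> E q u.
Proof.
move=> /and3P [/and3P [huv uS vS] cu /eqP hd] nux hq /and3P [hqv qS _] hdq.
have [ku hu] := connect_reach cu.
have qu : q != u by apply/eqP => equ; move: hdq; rewrite equ hd; lia.
case/orP: (in_adj hqv huv qu) => // huq.
have := back hu hq (erefl _) _ huq; rewrite hd -hdq ltnSn => /(_ isT) hux.
by rewrite hux in nux.
Qed.

Lemma parpath p a q kq : path El a p -> ~~ E (last a p) x -> 1 < dist a ->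
  reachk kq q -> ES q (last a p) -> (dist q).+1 = dist a -> E q a.
Proof.
elim: p a => [|v p IH] a /=.
  by move=> _ _ _ _ /and3P [].
move=> /andP [hav hp] nlx h1 hq hql hdq.
have hd : dist a = dist v by case/and3P: hav => _ _ /eqP.
have hqv : E q v by apply: IH hq hql _ => //; rewrite -hd.
have nax : ~~ E a x.
  apply/negP => hax; have := Bpath (p := v :: p) _ h1 hax.
  by rewrite /= hav hp => /(_ isT); rewrite (negbTE nlx).
apply: (parstep hav nax hq); last by rewrite -hd.
by rewrite /= hqv (reachk_S hq); case/and3P: hav => /and3P [].
Qed.

Lemma El_start a p : path El a p -> p != [::] -> exists k, reachk k a.
Proof.
case: p => [|v p] //= /andP [/and3P [_ ca _] _] _; exact: connect_reach.
Qed.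

Lemma core a b : connect El a b -> connect El b a -> a != b -> E a b || E b a.
Proof.
move=> /connectP [p hp eb] /connectP [p' hp' ea] ab.
have [ka ha] : exists k, reachk k a.
  apply: El_start hp _; apply/eqP => p0; by rewrite eb p0 eqxx in ab.
have [kb hb] : exists k, reachk k b.
  apply: El_start hp' _; apply/eqP => p0; by rewrite ea p0 eqxx in ab.
have hdb : dist b = dist a by rewrite eb El_path.
case hda: (dist a) => [|[|n]].
- by rewrite (dist0 ha hda) (dist0 hb (etrans hdb hda)) eqxx in ab.
- have [q [hq /and3P [hqb _ _] _]] := dist_par hb (etrans hdb hda).
  have [q' [hq' /and3P [hqa _ _] _]] := dist_par ha hda.
  move: hq hq' hqb hqa => /= /eqP -> /= /eqP -> hxb hxa.
  exact: out_adj hxa hxb ab.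
- case hbx: (E b x).
    have hax : E a x.
      rewrite ea; apply: Bpath hp' _ hbx; by rewrite hdb hda.
    exact: in_adj hax hbx ab.
  have [q [hq hqb hdq]] := dist_par hb (etrans hdb hda).
  have hqa : E q a.
    apply: parpath hp _ _ hq _ _; rewrite -?eb ?hbx ?hda ?hdq //.
  by case/and3P: hqb => hqb _ _; apply: out_adj hqa hqb ab.
Qed.
End Layer.

Lemma cycle_conn (T : finType) (e : rel T) s y z : cycle e s -> y \in s -> z \in s -> connect e y z.
Proof.
move=> hc ys; case: (rot_to ys) => i s' hrot.
move=> zs; have zs' : z \in y :: s' by rewrite -hrot mem_rot.
have : cycle e (y :: s') by rewrite -hrot rot_cycle.
rewrite /= => hp; apply: (path_connect hp); by rewrite -cat1s mem_cat mem_rcons -mem_cat cat1s in_cons zs' orbT.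
Qed.

Lemma connect_mono (T : finType) (e : rel T) (h : T -> nat) y z :
  (forall u v, e u v -> h v <= h u) -> connect e y z -> h z <= h y.
Proof.
move=> hm /connectP [p hp ->]; elim: p y hp => [|v p IH] y //= /andP [hyv hp].
exact: leq_trans (IH _ hp) (hm _ _ hyv).
Qed.

Section Main.
Variables (H : finType) (EH : rel H) (c : nat).
Hypothesis hc : forall (T : finType) (ET : rel T),
      tournament ET -> ~ contains_induced EH ET -> dichromatic ET <= c.
Variables (V : finType) (E : rel V).
Hypothesis Eor : oriented E.
Hypothesis Eloc : forall x, tournament_on E (out_nbhd E x) /\ tournament_on E (in_nbhd E x).
Hypothesis hfree : ~ contains_induced EH E.

Lemma Gex (K : {set V}) : exists g : V -> nat, tournament_on E K ->
  (forall v, v \in K -> g v < c) /\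
    forall k s, dicycle E s -> all (fun v => (v \in K) && (g v == k)) s -> False.
Proof.
case: (classic (tournament_on E K)) => hK.
  have [g hg] := tour_col hc hfree hK; by exists g.
by exists (fun _ => 0).
Qed.

Definition G (K : {set V}) : V -> nat := proj1_sig (constructive_indefinite_description _ (Gex K)).
Lemma GP K : tournament_on E K -> (forall v, v \in K -> G K v < c) /\
    forall k s, dicycle E s -> all (fun v => (v \in K) && (G K v == k)) s -> False.
Proof. rewrite /G; case: constructive_indefinite_description => g /= //. Qed.

Definition goodcol (S : {set V}) (f : V -> nat) := (forall v, v \in S -> f v < 2 * c) /\
  forall k s, dicycle E s -> all (fun v => (v \in S) && (f v == k)) s -> False.

Section Step.
Variables (S : {set V}) (x : V).
Hypothesis xS : x \in S.
Definition R := [set v | connect (ES E S) x v].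
Definition block v := [set w | connect (El E S x) v w && connect (El E S x) w v].

Lemma block_in v : v \in block v.
Proof. by rewrite inE connect0. Qed.

Lemma block_tour v : tournament_on E (block v).
Proof.
case: Eor => hl hd; split=> [a _|a b _ _ hab|a b]; first exact: hl.
  exact: hd.
rewrite !inE => /andP [va av] /andP [vb bv] ab.
apply: (core Eloc xS) ab.
  exact: connect_trans av vb.
exact: connect_trans bv va.
Qed.

Lemma Gbound v : G (block v) v < c.
Proof. exact: (GP (block_tour v)).1 _ (block_in v). Qed.

Definition fcol (g : V -> nat) v :=
  if v \in R then odd (dist E S x v) * c + G (block v) v else g v.

Lemma par_eq (b1 b2 : bool) a1 a2 : a1 < c -> a2 < c -> b1 * c + a1 = b2 * c + a2 -> b1 = b2.
Proof. by case: b1; case: b2 => //= *; lia. Qed.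

Lemma block_eq y z : connect (El E S x) y z -> connect (El E S x) z y -> block z = block y.
Proof.
move=> yz zy; apply/setP => w; rewrite !inE; apply/andP/andP => [[zw wz]|[yw wy]].
  by split; [apply: connect_trans yz zw | apply: connect_trans wz zy].
by split; [apply: connect_trans zy yw | apply: connect_trans wy yz].
Qed.

Lemma step g : goodcol (S :\: R) g -> goodcol S (fcol g).
Proof.
move=> [gb gg]; split.
  move=> v vS; rewrite /fcol; case: ifP => vR.
    by have := Gbound v; case: odd => /=; lia.
  by apply: gb; rewrite inE vR vS.
move=> k s hs hall.
case hR: (has (fun v => v \in R) s); last first.
  apply: (gg k s hs); apply/allP => v vs.
  move/allP: hall => /(_ v vs) /andP [vS fk].
  move/hasPn: hR => /(_ v vs) vR.
  by rewrite in_setD vR vS /= -(eqP fk) /fcol (negbTE vR) eqxx.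
case/hasP: hR => y0 ys0 y0R.
have [us ss cs] := hs.
have cES : cycle (ES E S) s.
  apply: (sub_in_cycle (P := fun v => v \in S)) cs; last first.
    by apply: sub_all hall => v /andP [].
  by move=> u v uS vS huv; rewrite /= huv uS vS.
have allR : forall z, z \in s -> z \in R.
  move=> z zs; move: y0R; rewrite !inE => xy; apply: connect_trans xy _.
  exact: cycle_conn cES ys0 zs.
have fk : forall z, z \in s -> fcol g z = k.
  by move=> z zs; move/allP: hall => /(_ z zs) /andP [_ /eqP].
pose P := fun v => [&& v \in S, v \in R & fcol g v == k].
have allP' : all P s.
  apply/allP => z zs; rewrite /P /= allR // fk // eqxx andbT.
  by move/allP: hall => /(_ z zs) /andP [-> _].
have cm : cycle [rel u v | dist E S x v <= dist E S x u] s.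
  apply: (sub_in_cycle (P := P) _ allP' cs) => u v /and3P [uS uR /eqP fu]
    /and3P [vS vR /eqP fv] huv /=.
  have [ku hu] : exists k, reachk E S x k u by apply: connect_reach; move: uR; rewrite inE.
  have hES : ES E S u v by rewrite /= huv uS vS.
  have h := dist_arc hu hES.
  have hodd : odd (dist E S x u) = odd (dist E S x v).
    move: fu fv; rewrite /fcol uR vR => fu fv.
    by apply: (par_eq (Gbound u) (Gbound v)); rewrite fu fv.
  move: h; rewrite leq_eqVlt ltnS => /orP [/eqP hv|//].
  by move: hodd; rewrite hv /=; case: odd.
have hd : forall z, z \in s -> dist E S x z = dist E S x y0.
  move=> z zs; apply/eqP; rewrite eqn_leq.
  rewrite (connect_mono (h := dist E S x) _ (cycle_conn cm zs ys0)) //.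
  by rewrite (connect_mono (h := dist E S x) _ (cycle_conn cm ys0 zs)).
have cEl : cycle (El E S x) s.
  apply: (sub_in_cycle (P := fun v => (v \in S) && (v \in s))) cES; last first.
    by apply/allP => z zs; rewrite zs andbT; move/allP: hall => /(_ z zs) /andP [].
  move=> u v /andP [_ us'] /andP [_ vs'] huv; apply/and3P; split => //.
    by move: (allR u us'); rewrite inE.
  by rewrite hd // hd.
have hb : forall z, z \in s -> block z = block y0.
  by move=> z zs; apply: block_eq; [exact: cycle_conn cEl ys0 zs | exact: cycle_conn cEl zs ys0].
have [_ gK] := GP (block_tour y0).
apply: (gK (G (block y0) y0) s hs); apply/allP => z zs.
rewrite -(hb z zs) block_in /=; apply/eqP.
have := fk z zs; have := fk y0 ys0; rewrite /fcol (allR z zs) (allR y0 ys0) hd // hb // => <-.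
by move/addnI.
Qed.
End Step.

Lemma rec n : forall S : {set V}, #|S| <= n -> exists f, goodcol S f.
Proof.
elim: n => [|n IH] S hS.
  exists (fun _ => 0); split => [v|k s [_ ss _] hall].
    by move: hS; rewrite leqn0 cards_eq0 => /eqP ->; rewrite inE.
  move: hS; rewrite leqn0 cards_eq0 => /eqP eS.
  by case: s ss hall => // y s _; rewrite /= eS inE.
case: (set_0Vmem S) => [eS|[x xS]].
  apply: IH; by rewrite eS cards0.
have [g hg] : exists g, goodcol (S :\: R S x) g.
  apply: IH; rewrite -ltnS; apply: leq_trans hS.
  apply: proper_card; apply/properP; split; first exact: subsetDl.
  by exists x => //; rewrite !inE connect0.
exists (fcol S x g); exact: step.
Qed.
End Main.


Theorem theorem4p1 (H : finType) (EH : rel H) (c : nat) :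
  hero EH ->
  (* c is the maximum dichromatic number of an H-free tournament *)
  (forall (T : finType) (ET : rel T),
      tournament ET -> ~ contains_induced EH ET -> dichromatic ET <= c) ->
  (exists (T : finType) (ET : rel T),
      [/\ tournament ET, ~ contains_induced EH ET & dichromatic ET = c]) ->
  forall (V : finType) (E : rel V),
    oriented E ->
    (forall x : V, tournament_on E (out_nbhd E x) /\ tournament_on E (in_nbhd E x)) ->
    ~ contains_induced EH E ->
    dichromatic E <= 2 * c.
Proof.
move=> _ hc _ V E Eor Eloc hfree.
have [f [fb fg]] := rec hc Eor Eloc hfree (leqnn #|[set: V]|).
have hd : dicolourable E (2 * c).
  exists (fun v => Ordinal (fb v (in_setT v))) => i s hs hall.
  apply: (fg (nat_of_ord i) s hs).
  apply/(@allP V) => v vs.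
  move/(@allP V): hall => /(_ v vs); rewrite !inE => /eqP <-; exact: eqxx.
rewrite /dichromatic; case: ex_minnP => m _ hmin; apply: hmin.
by rewrite /dicolourableb; case: excluded_middle_informative.
Qed.
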